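(* Let $u_1,\dots,u_n$ be words over $[n]$ with $u_j\in[n]^{k_j}$ ($k_j\geq0$). Then \[ \Pi\left(\begin{bmatrix}e_{u_1}\\ \vdots\\ e_{u_n}\end{bmatrix}\right)=\sum_{j=1}^n\left(e_{u_j}\otimes f_j-\frac{\delta^l(l_{ju_j})[1\oplus\cdots\oplus1]}{k_j+1}\right), \] where $ju_j$ denotes the word obtained by prefixing the letter $j$ to $u_j$.
   Context: Let $\{e_1,\dots,e_n\}$ be an orthonormal basis of $\mathbb{C}^n$, $\{f_1,\dots,f_n\}$ the standard basis. The full Fock space is $\mathcal{F}(\mathbb{C}^n)=\mathbb{C}1\oplus\bigoplus_{k\geq1}(\mathbb{C}^n)^{\otimes k}$; for a word $w=i_1\cdots i_k$ over $[n]=\{1,\dots,n\}$, $e_w=e_{i_1}\otimes\cdots\otimes e_{i_k}$, $e_\epsilon=1$; $[n]^k$ is the set of words of length $k$. Let $l_je_w=e_{jw}$, $l_u=l_{u_1}\cdots l_{u_p}$ for $u=u_1\cdots u_p$, $s_j=l_j+l_j^*$. Let $\mathbb{C}^l_{\langle n\rangle}$ (resp. $\mathbb{C}^s_{\langle n\rangle}$) be the unital algebra generated by $l_1,\dots,l_n$ (resp. $s_1,\dots,s_n$), and $\delta^l$ (resp. $\delta^s$) the cyclic gradient: the linear map into $n$-tuples ($\cong$ algebra $\otimes\,\mathbb{C}^n$) with $\delta^l(l_{i_1}\cdots l_{i_p})=\sum_{j=1}^p l_{i_{j+1}}\cdots l_{i_p}l_{i_1}\cdots l_{i_{j-1}}\otimes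 f_{i_j}$ (resp. the same with $s$ in place of $l$). For a tuple $(x_1,\dots,x_n)$ of operators, $(x_1,\dots,x_n)[1\oplus\cdots\oplus1]=(x_11,\dots,x_n1)\in\mathcal{F}(\mathbb{C}^n)^n$. The free Leray projection $\Pi$ (on the Fock space side) is the orthogonal projection of $\mathcal{F}(\mathbb{C}^n)^n$ onto $\mathcal{F}(\mathbb{C}^n)^n\ominus\overline{\delta^s(\mathbb{C}^s_{\langle n\rangle})[1\oplus\cdots\oplus1]}$, the closure of the image on the vacuum of the free divergence-free vector field; here $\delta^s(\mathbb{C}^s_{\langle n\rangle})[1\oplus\cdots\oplus1]=\delta^l(\mathbb{C}^l_{\langle n\rangle})[1\oplus\cdots\oplus1]$. Vectors of $\mathcal{F}(\mathbb{C}^n)^n$ are identified with $\mathcal{F}(\mathbb{C}^n)\otimes\mathbb{C}^n$ via $(\xi_1,\dots,\xi_n)\mapsto\sum_j\xi_j\otimes f_j$. *)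

(* Defs.v *)
From HB Require Import structures.
From mathcomp Require Import all_boot all_order all_algebra.
From mathcomp Require Import reals.
From mathcomp.real_closed Require Import complex.
Set Implicit Arguments. Unset Strict Implicit. Unset Printing Implicit Defensive.
Import Order.TTheory GRing.Theory Num.Theory.
Local Open Scope ring_scope.

(* Words over [n] = {0,...,n-1} (0-based indexing of the letters 1..n). *)
Definition word (n : nat) := seq 'I_n.

(* A vector of the algebraic tensor product F(C^n) (x) C^n, i.e. a finite
   linear combination  sum c * (e_w (x) f_i)  of the orthonormal basis vectors
   e_w (x) f_i, given as a finite formal sum (list of (c, (w, i))).
   Via (xi_1..xi_n) |-> sum_j xi_j (x) f_j this is F(C^n)^n. *)
Definition fvec (C : Type) (n : nat) := seq (C * (word n * 'I_n)).

Section FockVec.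
Variables (R : realType) (n : nat).
Notation C := (R[i]).
Notation V := (fvec C n).

Definition ebasis (w : word n) (i : 'I_n) : V := [:: (1, (w, i))].
Definition fadd (x y : V) : V := x ++ y.
Definition fscale (c : C) (x : V) : V := [seq (c * t.1, t.2) | t <- x].
Definition fsub (x y : V) : V := fadd x (fscale (-1) y).

(* Inner product (linear in the first, conjugate-linear in the second
   variable), determined by orthonormality of the e_w (x) f_i. *)
Definition finner (x y : V) : C :=
  \sum_(t <- x) \sum_(s <- y) (t.2 == s.2)%:R * t.1 * (s.1)^*.
Definition fnorm2 (x : V) : C := finner x x.

(* Noncommutative polynomials in l_1..l_n, i.e. elements of C^l_<n>, as
   finite formal sums  sum c * l_u  (the monomials l_u are linearly
   independent since l_u 1 = e_u). *)
Definition lpoly := seq (C * word n).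

(* delta^l(l_u)[1 (+) ... (+) 1] for u = u_1...u_p :
   sum_{j=1}^p  e_{u_{j+1}...u_p u_1...u_{j-1}} (x) f_{u_j}. *)
Definition cycgrad_vac (u : word n) : V :=
  [seq (1, (drop p.1.+1 u ++ take p.1 u, p.2)) | p <- zip (iota 0 (size u)) u].

Definition grad_vac (P : lpoly) : V :=
  flatten [seq fscale t.1 (cycgrad_vac t.2) | t <- P].

(* The free Leray projection: Pi is the orthogonal projection of
   F(C^n)^n onto the orthogonal complement of the closure of
   D := delta^l(C^l_<n>)[1 (+) ... (+) 1].  For vectors x, y,
   Pi x = y  iff  y is orthogonal to D (equivalently to its closure)
   and x - y lies in the closure of D. *)
Definition leray_proj_is (x y : V) : Prop :=
  (forall P : lpoly, finner y (grad_vac P) = 0) /\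
  (forall eps : C, 0 < eps ->
     exists P : lpoly, fnorm2 (fsub (fsub x y) (grad_vac P)) < eps).

End FockVec.

(* Main.v *)
Require Import Defs.
From HB Require Import structures.
From mathcomp Require Import all_boot all_order all_algebra.
From mathcomp Require Import reals.
From mathcomp.real_closed Require Import complex.
From mathcomp Require Import ring.
Import Order.TTheory GRing.Theory Num.Theory.
Local Open Scope ring_scope.
Set Implicit Arguments. Unset Strict Implicit.

Section Comb.
Variable T : eqType.

Definition Sw (w : seq T) := [seq rot m w | m <- iota 0 (size w)].
Definition Rw (w : seq T) := [seq rot m.+1 w | m <- iota 0 (size w)].

Lemma Rw_map w : Rw w = map (rot 1) (Sw w).
Proof.
rewrite /Rw /Sw -map_comp; apply/eq_in_map => m; rewrite mem_iota add0n => Hm /=.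
by rewrite rotS.
Qed.

Lemma count_SR w z : count (pred1 z) (Sw w) = count (pred1 z) (Rw w).
Proof.
rewrite /Rw /Sw; case Hs: (size w) => [|p] //.
have -> : [seq rot m.+1 w | m <- iota 0 p.+1] = [seq rot m w | m <- iota 1 p] ++ [:: rot p.+1 w].
  rewrite -addn1 iotaD map_cat; congr (_ ++ _).
    have -> : iota 1 p = map (addn 1) (iota 0 p) by rewrite -iotaDl.
    by rewrite -map_comp.
  by rewrite add0n addn1.
have -> : iota 0 p.+1 = 0%N :: iota 1 p by [].
by rewrite count_cat /= rot0 -Hs rot_size addn0 addnC.
Qed.

Lemma count_R_rot1 w z : count (pred1 (rot 1 z)) (Rw w) = count (pred1 z) (Rw w).
Proof.
rewrite {1}Rw_map count_map -count_SR; apply: eq_count => x /=.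
by rewrite (inj_eq (@rot_inj 1%N _)).
Qed.

Lemma count_R_rot w z m : (m <= size z)%N ->
  count (pred1 (rot m z)) (Rw w) = count (pred1 z) (Rw w).
Proof.
elim: m => [|m IH] Hm; first by rewrite rot0.
by rewrite rotS // count_R_rot1 IH // ltnW.
Qed.
End Comb.

Section Fock.
Variables (R : realType) (n : nat).
Notation C := (R[i]).
Notation V := (fvec C n).

Definition coef (x : V) (b : word n * 'I_n) : C :=
  \sum_(t <- x) (t.2 == b)%:R * t.1.
Definition rho (b : word n * 'I_n) : word n := rcons b.1 b.2.
Definition key (w : word n) (p : nat * 'I_n) : word n * 'I_n :=
  (drop p.1.+1 w ++ take p.1 w, p.2).

Lemma rho_eq b b' : (b == b') = (rho b == rho b').
Proof. by case: b => ? ?; case: b' => ? ?; rewrite /rho eqseq_rcons. Qed.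

Lemma zip_key (w : word n) :
  [seq rho (key w p) | p <- zip (iota 0 (size w)) w] = Rw w.
Proof.
case: w => [|x w'] //; set w := x :: w'.
have zipE : zip (iota 0 (size w)) w = [seq (m, nth x w m) | m <- iota 0 (size w)].
  apply: (@eq_from_nth _ (0%N, x)).
    by rewrite size_zip size_iota minnn size_map size_iota.
  move=> i; rewrite size_zip size_iota minnn => Hi.
  by rewrite nth_zip ?size_iota // (nth_map 0%N) ?size_iota // nth_iota.
rewrite zipE -map_comp /Rw; apply/eq_in_map => m; rewrite mem_iota add0n => Hm /=.
by rewrite /rho /key /= rcons_cat -take_nth.
Qed.

Lemma sum_key (w : word n) (F : word n -> C) :
  \sum_(p <- zip (iota 0 (size w)) w) F (rho (key w p)) = \sum_(r <- Rw w) F r.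
Proof. by rewrite -zip_key big_map. Qed.

Lemma sum_count (s : seq (word n)) a :
  \sum_(r <- s) ((r == a)%:R : C) = (count (pred1 a) s)%:R.
Proof.
elim: s => [|x s IH]; first by rewrite big_nil.
by rewrite big_cons IH /= natrD.
Qed.

Lemma sum_const_seq (T : Type) (s : seq T) (c : C) :
  \sum_(x <- s) c = c *+ size s.
Proof.
elim: s => [|x s IH]; first by rewrite big_nil.
by rewrite big_cons IH /= mulrS.
Qed.

Lemma finnerE (x y : V) : finner x y = \sum_(s <- y) coef x s.2 * (s.1)^*.
Proof.
rewrite /finner exchange_big; apply: eq_bigr => s _.
by rewrite /coef mulr_suml.
Qed.

Lemma coef_cat x y b : coef (x ++ y) b = coef x b + coef y b.
Proof. by rewrite /coef big_cat. Qed.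

Lemma coef_scale c x b : coef (fscale c x) b = c * coef x b.
Proof.
rewrite /coef /fscale big_map mulr_sumr; apply: eq_bigr => t _ /=.
by rewrite mulrCA.
Qed.

Lemma coef_flatten (A : Type) (F : A -> V) s b :
  coef (flatten (map F s)) b = \sum_(a <- s) coef (F a) b.
Proof.
elim: s => [|a s IH]; first by rewrite big_nil /coef big_nil.
by rewrite /= coef_cat big_cons IH.
Qed.

Lemma coef_e w i b : coef (@ebasis R n w i) b = (((w, i) == b)%:R : C).
Proof. by rewrite /coef big_seq1 mulr1. Qed.

Lemma coef_cyc v b : coef (@cycgrad_vac R n v) b = (count (pred1 (rho b)) (Rw v))%:R.
Proof.
rewrite -sum_count -sum_key /coef /cycgrad_vac big_map.
by apply: eq_bigr => p _; rewrite /= mulr1 rho_eq.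
Qed.

Lemma coef_grad P b :
  coef (@grad_vac R n P) b = \sum_(t <- P) t.1 * coef (@cycgrad_vac R n t.2) b.
Proof. by rewrite /grad_vac coef_flatten; apply: eq_bigr => t _; rewrite coef_scale. Qed.

End Fock.

Section Main.
Variables (R : realType) (n : nat) (k : 'I_n -> nat)
    (u : forall j : 'I_n, (k j).-tuple 'I_n).
Notation C := (R[i]).
Notation V := (fvec C n).

Definition cj (j : 'I_n) : C := ((k j).+1%:R)^-1.
Definition vj (j : 'I_n) : word n := j :: (u j : word n).

Definition yv : V := (flatten [seq fadd (@ebasis R n (u j : word n) j)
                       (fscale (- ((k j).+1%:R)^-1)
                               (grad_vac [:: (1 : R[i], j :: (u j : word n))]))
             | j <- enum 'I_n]).
Definition xv : V := flatten [seq @ebasis R n (u j : word n) j | j <- enum 'I_n].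

Lemma coef_x b : coef xv b = \sum_(j <- enum 'I_n) (((u j : word n), j) == b)%:R.
Proof. by rewrite /xv coef_flatten; apply: eq_bigr => j _; rewrite coef_e. Qed.

Lemma coef_y b : coef yv b = \sum_(j <- enum 'I_n)
   ((((u j : word n), j) == b)%:R - cj j * coef (@cycgrad_vac R n (vj j)) b).
Proof.
rewrite /yv coef_flatten; apply: eq_bigr => j _.
rewrite /fadd coef_cat coef_e coef_scale coef_grad big_seq1 /= mul1r.
by rewrite mulNr.
Qed.

Definition Hy (r : word n) : C := \sum_(j <- enum 'I_n)
   ((r == rcons (u j : word n) j)%:R - cj j * (count (pred1 r) (Rw (vj j)))%:R).

Lemma coef_yH b : coef yv b = Hy (rho b).
Proof.
rewrite coef_y; apply: eq_bigr => j _.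
by rewrite coef_cyc rho_eq eq_sym.
Qed.

Lemma Hy_sum (w : word n) : \sum_(r <- Rw w) Hy r = 0.
Proof.
rewrite /Hy exchange_big /=; apply: big1 => j _.
rewrite sumrB -mulr_sumr.
have -> : \sum_(r <- Rw w) ((r == rcons (u j : word n) j)%:R : C)
          = (count (pred1 (vj j)) (Rw w))%:R.
  by rewrite sum_count /vj -rot1_cons count_R_rot1.
have -> : \sum_(r <- Rw w) ((count (pred1 r) (Rw (vj j)))%:R : C)
          = (count (pred1 (vj j)) (Rw w))%:R *+ (k j).+1.
  transitivity (\sum_(r <- Rw w) \sum_(r' <- Rw (vj j)) ((r' == r)%:R : C)).
    by apply: eq_bigr => r _; rewrite sum_count.
  rewrite exchange_big /=.
  transitivity (\sum_(r' <- Rw (vj j)) ((count (pred1 (vj j)) (Rw w))%:R : C)).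
    rewrite {1}/Rw big_map; rewrite [in RHS]/Rw big_map.
    rewrite big_seq [in RHS]big_seq; apply: eq_bigr => m.
    rewrite mem_iota add0n => Hm.
    transitivity (\sum_(i <- Rw w) ((i == rot m.+1 (vj j))%:R : C)).
      by apply: eq_bigr => i _; rewrite eq_sym.
    by rewrite sum_count count_R_rot.
  by rewrite sum_const_seq /Rw size_map size_iota /vj /= size_tuple.
rewrite -[_ *+ (k j).+1]mulr_natl mulrA /cj mulVf ?mul1r ?subrr //.
by rewrite pnatr_eq0.
Qed.

Lemma orth_part (P : lpoly R n) : finner yv (grad_vac P) = 0.
Proof.
rewrite finnerE /grad_vac big_flatten big_map /=; apply: big1 => t _.
rewrite /fscale /cycgrad_vac -map_comp big_map /=.
transitivity (\sum_(p <- zip (iota 0 (size t.2)) t.2) Hy (rho (key t.2 p)) * (t.1 * 1)^*).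
  by apply: eq_bigr => p _; rewrite coef_yH.
by rewrite -mulr_suml sum_key Hy_sum mul0r.
Qed.

Definition Pv : lpoly R n := [seq (cj j, vj j) | j <- enum 'I_n].

Lemma coef_z b : coef (fsub (fsub xv yv) (grad_vac Pv)) b = 0.
Proof.
rewrite /fsub /fadd !coef_cat !coef_scale coef_x coef_y coef_grad /Pv (big_map (fun j => (cj j, vj j))) /=.
rewrite sumrB.
ring.
Qed.

End Main.

Theorem corollary3p5 (R : realType) (n : nat) (k : 'I_n -> nat)
    (u : forall j : 'I_n, (k j).-tuple 'I_n) :
  leray_proj_is
    (flatten [seq @ebasis R n (u j : word n) j | j <- enum 'I_n])
    (flatten [seq fadd (@ebasis R n (u j : word n) j)
                       (fscale (- ((k j).+1%:R)^-1)
                               (grad_vac [:: (1 : R[i], j :: (u j : word n))]))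
             | j <- enum 'I_n]).
Proof.
split.
  move=> P; exact (orth_part u P).
move=> eps Heps; exists (@Pv R n k u).
rewrite /fnorm2 finnerE big1 //.
by move=> s _; rewrite (@coef_z R n k u) mul0r.
Qed.
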